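(* For every $v\geq 8$ there exists a connected symmetric configuration $v_3$ with strong chromatic number exactly 4.
   Context: A symmetric configuration $v_3$ consists of a set of $v$ points and a collection of $v$ blocks, each block being a 3-element subset of the points, such that every point lies in exactly 3 blocks and any two distinct points lie in at most one common block; it is connected if it is not the union of two configurations on disjoint nonempty point sets. A strong colouring is an assignment of colours to points such that the three points of every block receive three distinct colours; the strong chromatic number is the minimum number of colours in a strong colouring (equivalently, the chromatic number of the graph on the points in which two points are adjacent iff they share a block). *)

(* Defs.v *)
From mathcomp Require Import all_boot.
Set Implicit Arguments. Unset Strict Implicit. Unset Printing Implicit Defensive.

Definition sym_config_v3 (v : nat) (Bs : {set {set 'I_v}}) : Prop :=
  [/\ #|Bs| = v,
      (forall b, b \in Bs -> #|b| = 3),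
      (forall x : 'I_v, #|[set b in Bs | x \in b]| = 3) &
      (forall x y : 'I_v, x != y -> #|[set b in Bs | (x \in b) && (y \in b)]| <= 1)].

Definition config_connected (v : nat) (Bs : {set {set 'I_v}}) : Prop :=
  ~ exists S : {set 'I_v},
      [/\ S != set0, ~: S != set0 &
          forall b, b \in Bs -> (b \subset S) || (b \subset ~: S)].

Definition strong_colouring (v k : nat) (Bs : {set {set 'I_v}})
    (c : {ffun 'I_v -> 'I_k}) : bool :=
  [forall b in Bs, forall x in b, forall y in b, (c x == c y) ==> (x == y)].

Definition strong_colourable (v : nat) (Bs : {set {set 'I_v}}) (k : nat) : bool :=
  [exists c : {ffun 'I_v -> 'I_k}, strong_colouring Bs c].

Lemma strong_colourable_exists (v : nat) (Bs : {set {set 'I_v}}) :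
  exists k, strong_colourable Bs k.
Proof.
exists v; apply/existsP; exists [ffun x => x].
apply/forallP => b; apply/implyP => _; apply/forallP => x; apply/implyP => _.
apply/forallP => y; apply/implyP => _; apply/implyP; rewrite !ffunE; done.
Qed.

Definition strong_chromatic_number (v : nat) (Bs : {set {set 'I_v}}) : nat :=
  ex_minn (strong_colourable_exists Bs).

(* Main.v *)
Require Import Defs.
From mathcomp Require Import all_boot zify.
Set Implicit Arguments. Unset Strict Implicit. Unset Printing Implicit Defensive.

Definition trip := (nat * nat * nat)%type.
Definition inT (x : nat) (t : trip) : bool := [|| x == t.1.1, x == t.1.2 | x == t.2].
Definition blk v (T : nat -> trip) (i : 'I_v) : {set 'I_v} := [set x : 'I_v | inT x (T i)].
Definition BS v (T : nat -> trip) : {set {set 'I_v}} := [set blk T i | i : 'I_v].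

Lemma card_count v (P : pred nat) : #|[set i : 'I_v | P i]| = count P (iota 0 v).
Proof.
rewrite -sum1_card (eq_bigl (fun i : 'I_v => P i)) => [|i]; last by rewrite inE.
by rewrite -(big_mkord P (fun _ => 1)) sum1_count /index_iota subn0.
Qed.

Lemma count3 v a b c : a < v -> b < v -> c < v -> a != b -> a != c -> b != c ->
  count (fun x => inT x (a, b, c)) (iota 0 v) = 3.
Proof.
move=> av bv cv ab ac bc.
have E : forall x, inT x (a,b,c) = [|| x == a, x == b | x == c] by [].
have cm : forall y, y < v -> count (pred1 y) (iota 0 v) = 1.
  by move=> y yv; rewrite count_uniq_mem ?iota_uniq // mem_iota yv.
rewrite (eq_count (a2 := predU (pred1 a) (predU (pred1 b) (pred1 c)))); last first.
  by move=> x; rewrite /= E.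
have h1 := count_predUI (pred1 a) (predU (pred1 b) (pred1 c)) (iota 0 v).
have h2 := count_predUI (pred1 b) (pred1 c) (iota 0 v).
have z1 : count (predI (pred1 a) (predU (pred1 b) (pred1 c))) (iota 0 v) = 0.
  rewrite (eq_count (a2 := pred0)) ?count_pred0 // => x /=.
  by apply/negbTE; apply/negP => /andP [/eqP -> /orP [] /eqP E']; move: ab ac; rewrite E' eqxx.
have z2 : count (predI (pred1 b) (pred1 c)) (iota 0 v) = 0.
  rewrite (eq_count (a2 := pred0)) ?count_pred0 // => x /=.
  by apply/negbTE; apply/negP => /andP [/eqP -> /eqP E']; move: bc; rewrite E' eqxx.
rewrite !cm // in h1 h2; lia.
Qed.

Definition cob v (T : nat -> trip) x y := has (fun i => inT x (T i) && inT y (T i)) (iota 0 v).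

Lemma generic v (T : nat -> trip) (col : nat -> nat) p q r s :
  0 < v ->
  (forall i, i < v -> [&& (T i).1.1 < v, (T i).1.2 < v, (T i).2 < v,
      (T i).1.1 != (T i).1.2, (T i).1.1 != (T i).2 & (T i).1.2 != (T i).2]) ->
  (forall x, x < v -> 3 <= count (fun i => inT x (T i)) (iota 0 v)) ->
  (forall x y i j, x < v -> y < v -> i < v -> j < v -> x != y ->
      inT x (T i) -> inT y (T i) -> inT x (T j) -> inT y (T j) -> i = j) ->
  (forall x, x < v -> col x < 4) ->
  (forall i, i < v -> [&& col (T i).1.1 != col (T i).1.2, col (T i).1.1 != col (T i).2
      & col (T i).1.2 != col (T i).2]) ->
  [&& p < v, q < v, r < v & s < v] ->
  [&& p != q, p != r, p != s, q != r, q != s & r != s] ->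
  [&& cob v T p q, cob v T p r, cob v T p s, cob v T q r, cob v T q s & cob v T r s] ->
  (forall x, 0 < x < v -> has (fun i => has (fun y => inT x (T i) && inT y (T i)) (iota 0 x)) (iota 0 v)) ->
  exists Bs : {set {set 'I_v}},
    [/\ sym_config_v3 Bs, config_connected Bs & strong_chromatic_number Bs = 4].
Proof.
move=> v0 H1 H2 H3 Hc1 Hc2 Hpv Hdis Hcob H6.
exists (BS v T).
have memb : forall (i x : 'I_v), (x \in blk T i) = inT x (T i) by move=> i x; rewrite inE.
have cardb : forall i : 'I_v, #|blk T i| = 3.
  move=> i; rewrite /blk (card_count v (fun x => inT x (T i))).
  have := H1 i (ltn_ord i); case: (T i) => [[a b] c] /= /and5P [av bv cv ab /andP[ac bc]].
  exact: count3.
have inj : injective (@blk v T).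
  move=> i j E.
  have := H1 i (ltn_ord i); move: E.
  case Ei : (T i) => [[a b] c] /= E /and5P [av bv cv ab /andP[ac bc]].
  have ha : Ordinal av \in blk T i by rewrite memb Ei /inT eqxx.
  have hb : Ordinal bv \in blk T i by rewrite memb Ei /inT eqxx orbT.
  apply: val_inj; apply: (H3 a b) => //; try exact: ltn_ord.
  - by move: ha; rewrite memb.
  - by move: hb; rewrite memb.
  - by move: ha; rewrite E memb.
  - by move: hb; rewrite E memb.
have degE : forall x : 'I_v, #|[set b in BS v T | x \in b]| = #|[set i : 'I_v | x \in blk T i]|.
  move=> x; rewrite -(card_imset _ inj); apply: eq_card => b; rewrite !inE.
  apply/andP/imsetP => [[/imsetP [i _ ->] xb]|[i]].
    by exists i => //; rewrite inE.
  by rewrite inE => xi ->; split => //; apply: imset_f.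
have deg3 : forall x : 'I_v, 3 <= #|[set i : 'I_v | x \in blk T i]|.
  move=> x; rewrite (eq_card (B := [set i : 'I_v | inT x (T i)])) ?(card_count v (fun i => inT x (T i))) ?H2 //.
  by move=> i; rewrite !inE.
have sumd : \sum_(x : 'I_v) #|[set i : 'I_v | x \in blk T i]| = 3 * v.
  transitivity (\sum_(x : 'I_v) \sum_(i : 'I_v) (x \in blk T i : nat)).
    apply: eq_bigr => x _; rewrite -sum1_card big_mkcond /=.
    by apply: eq_bigr => i _; rewrite inE; case: (x \in blk T i).
  rewrite exchange_big /= -[v in 3 * v]card_ord mulnC -sum_nat_const.
  apply: eq_bigr => i _; rewrite -(cardb i) -sum1_card [RHS]big_mkcond /=.
  by apply: eq_bigr => x _; case: (x \in blk T i).
have deg : forall x : 'I_v, #|[set i : 'I_v | x \in blk T i]| = 3.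
  move=> x; apply/eqP; rewrite eqn_leq deg3 andbT.
  move: sumd; rewrite (bigD1 x) //= => sumd.
  have : \sum_(y < v | y != x) 3 <= \sum_(y < v | y != x) #|[set i : 'I_v | y \in blk T i]|.
    by apply: leq_sum => y _; apply: deg3.
  have : \sum_(y : 'I_v) 3 = 3 * v by rewrite sum_nat_const card_ord mulnC.
  rewrite (bigD1 x) //= => h1 h2; move: sumd h1 h2.
  set A := (\sum_(i < v | i != x) 3); set B := (\sum_(i < v | i != x) _); set D := #|_|; lia.
split.
- split.
  + by rewrite card_imset // card_ord.
  + by move=> b /imsetP [i _ ->]; apply: cardb.
  + by move=> x; rewrite degE deg.
  + move=> x y xy; apply/card_le1_eqP => b1 b2; rewrite !inE.
    case/andP => /imsetP [i _ ->] /andP [xi yi] /andP [/imsetP [j _ ->] /andP [xj yj]].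
    congr blk; apply: val_inj; apply: (H3 x y) => //; try exact: ltn_ord; by rewrite -memb.
- case=> S [S0 SC0 Hside].
  have key : forall n (x : 'I_v), x < n -> (x \in S) = (Ordinal v0 \in S).
    elim => [//|n IH] x xn.
    case: (posnP x) => [x0|xpos].
      by congr (_ \in S); apply: val_inj.
    have := H6 x; rewrite xpos ltn_ord => /(_ isT) /hasP [i]; rewrite mem_iota add0n => iv.
    move=> /hasP [y]; rewrite mem_iota add0n => /andP [_ yx] /andP [xi yi].
    have yv : y < v by apply: ltn_trans yx _.
    have bI : blk T (Ordinal iv) \in BS v T by apply: imset_f.
    have hx : x \in blk T (Ordinal iv) by rewrite memb.
    have hy : Ordinal yv \in blk T (Ordinal iv) by rewrite memb.
    rewrite -(IH (Ordinal yv)); last by rewrite /=; apply: leq_trans yx _; rewrite -ltnS.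
    case/orP: (Hside _ bI) => /subsetP sub.
      by rewrite (sub _ hx) (sub _ hy).
    by move: (sub _ hx) (sub _ hy); rewrite !inE => /negbTE -> /negbTE ->.
  case/set0Pn: S0 => x xS; case/set0Pn: SC0 => z; rewrite inE.
  by rewrite (key v z (ltn_ord z)) -(key v x (ltn_ord x)) xS.
- have Hdiff : forall i x y, i < v -> x != y -> inT x (T i) -> inT y (T i) -> col x != col y.
    move=> i x y iv xy; have := Hc2 i iv; case: (T i) => [[a b] c] /= /and3P [h1 h2 h3].
    rewrite /inT /= => /or3P [] /eqP Ex /or3P [] /eqP Ey; subst x y.
    all: try by rewrite eqxx in xy.
    all: try done. all: try by rewrite eq_sym.
  have col4 : strong_colourable (BS v T) 4.
    apply/existsP; exists [ffun x : 'I_v => inord (col x) : 'I_4].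
    apply/forallP => b; apply/implyP => /imsetP [i _ ->].
    apply/forallP => x; apply/implyP => xi; apply/forallP => y; apply/implyP => yi.
    apply/implyP; rewrite !ffunE => /eqP E.
    apply/negPn/negP => xy.
    have := Hdiff i x y (ltn_ord i) xy; rewrite -!memb xi yi => /(_ isT isT).
    have hx := Hc1 x (ltn_ord x); have hy := Hc1 y (ltn_ord y).
    move: E => /(congr1 (@nat_of_ord 4)); rewrite !inordK // => ->.
    by rewrite eqxx.

  have no : forall k, k < 4 -> ~~ strong_colourable (BS v T) k.
    move=> k k4; apply/negP => /existsP [c Hc].
    have D : forall (x y : 'I_v), x != y -> cob v T x y -> val (c x) != val (c y).
      move=> x y xy /hasP [i]; rewrite mem_iota add0n => iv /andP [xi yi].
      have bI : blk T (Ordinal iv) \in BS v T by apply: imset_f.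
      move/forallP: Hc => /(_ _) /implyP /(_ bI) /forallP /(_ x) /implyP.
      rewrite memb => /(_ xi) /forallP /(_ y) /implyP; rewrite memb => /(_ yi).
      move=> /implyP H; apply/negP => /eqP E; have := H (introT eqP (val_inj E)); by rewrite (negbTE xy).
    case/and4P: Hpv => pv qv rv sv.
    case/and5P: Hdis => pq pr ps qr /andP [qs rs].
    case/and5P: Hcob => cpq cpr cps cqr /andP [cqs crs].
    have d1 := D (Ordinal pv) (Ordinal qv) pq cpq.
    have d2 := D (Ordinal pv) (Ordinal rv) pr cpr.
    have d3 := D (Ordinal pv) (Ordinal sv) ps cps.
    have d4 := D (Ordinal qv) (Ordinal rv) qr cqr.
    have d5 := D (Ordinal qv) (Ordinal sv) qs cqs.
    have d6 := D (Ordinal rv) (Ordinal sv) rs crs.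
    have l1 : val (c (Ordinal pv)) < k := ltn_ord _.
    have l2 : val (c (Ordinal qv)) < k := ltn_ord _.
    have l3 : val (c (Ordinal rv)) < k := ltn_ord _.
    have l4 : val (c (Ordinal sv)) < k := ltn_ord _.
    move: d1 d2 d3 d4 d5 d6 l1 l2 l3 l4.
    set a1 := val (c _); set a2 := val (c _); set a3 := val (c _); set a4 := val (c _).
    lia.
  rewrite /strong_chromatic_number; case: ex_minnP => m Hm Hmin.
  apply/eqP; rewrite eqn_leq (Hmin 4 col4) /= leqNgt; apply/negP => lt.
  by move: (no m lt); rewrite Hm.
Qed.

Definition chk v (T : nat -> trip) (col : nat -> nat) p q r s : bool :=
  (0 < v) &&
  (all (fun i => [&& (T i).1.1 < v, (T i).1.2 < v, (T i).2 < v,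
      (T i).1.1 != (T i).1.2, (T i).1.1 != (T i).2 & (T i).1.2 != (T i).2]) (iota 0 v)) &&
  (all (fun x => 3 <= count (fun i => inT x (T i)) (iota 0 v)) (iota 0 v)) &&
  (all (fun x => all (fun y => all (fun i => all (fun j =>
      (x != y) && inT x (T i) && inT y (T i) && inT x (T j) && inT y (T j) ==> (i == j))
      (iota 0 v)) (iota 0 v)) (iota 0 v)) (iota 0 v)) &&
  (all (fun x => col x < 4) (iota 0 v)) &&
  (all (fun i => [&& col (T i).1.1 != col (T i).1.2, col (T i).1.1 != col (T i).2
      & col (T i).1.2 != col (T i).2]) (iota 0 v)) &&
  [&& p < v, q < v, r < v & s < v] &&
  [&& p != q, p != r, p != s, q != r, q != s & r != s] &&
  [&& cob v T p q, cob v T p r, cob v T p s, cob v T q r, cob v T q s & cob v T r s] &&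
  (all (fun x => (x == 0) || has (fun i => has (fun y => inT x (T i) && inT y (T i)) (iota 0 x)) (iota 0 v)) (iota 0 v)).

Lemma chk_sound v T col p q r s : chk v T col p q r s ->
  exists Bs : {set {set 'I_v}},
    [/\ sym_config_v3 Bs, config_connected Bs & strong_chromatic_number Bs = 4].
Proof.
have mi : forall n x, (x \in iota 0 n) = (x < n) by move=> n x; rewrite mem_iota.
rewrite /chk => /andP [/andP [/andP [/andP [/andP [/andP [/andP [/andP [/andP [v0 a1] a2] a3] a4] a5] a6] a7] a8] a9].
apply: (generic (T := T) (col := col) (p := p) (q := q) (r := r) (s := s)) => //.
all: try by move=> i iv; apply: (allP a1); rewrite mi.
all: try by move=> i iv; apply: (allP a2); rewrite mi.
all: try by move=> i iv; apply: (allP a4); rewrite mi.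
all: try by move=> i iv; apply: (allP a5); rewrite mi.
- move=> x y i j xv yv iv jv xy h1 h2 h3 h4; apply/eqP.
  move/allP: a3 => /(_ x); rewrite mi => /(_ xv) /allP /(_ y); rewrite mi => /(_ yv).
  move/allP => /(_ i); rewrite mi => /(_ iv) /allP /(_ j); rewrite mi => /(_ jv).
  by rewrite xy h1 h2 h3 h4.
- move=> x /andP [x0 xv]; move/allP: a9 => /(_ x); rewrite mi => /(_ xv).
  by rewrite eqn0Ngt x0.
Qed.

Definition tab (l : seq trip) : nat -> trip := fun i => nth (0,0,0) l i.
Definition ctab (l : seq nat) : nat -> nat := fun i => nth 0 l i.

Definition LEFT : seq trip := [:: (0,1,7); (0,2,3); (0,5,6); (1,2,8); (1,3,4)].
Definition RIGHT v : seq trip := [:: (v-1,v-2,v-3); (v-1,v-4,v-7); (v-2,v-4,v-5); (v-3,v-5,v-6)].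
Definition Tg v (i : nat) : trip :=
  if i < 5 then tab LEFT i else if i < v - 4 then (i-3, i-1, i+4) else tab (RIGHT v) (i - (v - 4)).
Definition cg (x : nat) := x %% 4.

Definition Ts v : nat -> trip :=
  match v with
  | 8 => tab [:: (0, 4, 7); (3, 6, 7); (0, 1, 3); (1, 2, 7); (1, 4, 5); (2, 3, 5); (2, 4, 6); (0, 5, 6)]
  | 9 => tab [:: (0, 4, 7); (3, 4, 5); (0, 3, 8); (0, 1, 6); (2, 3, 6); (2, 5, 8); (1, 7, 8); (1, 2, 4); (5, 6, 7)]
  | 10 => tab [:: (1, 4, 5); (0, 2, 6); (5, 7, 8); (0, 4, 7); (2, 4, 9); (0, 1, 8); (3, 8, 9); (6, 7, 9); (2, 3, 5); (1, 3, 6)]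
  | 11 => tab [:: (3, 6, 9); (3, 8, 10); (0, 8, 9); (1, 5, 6); (1, 4, 10); (0, 2, 3); (2, 5, 8); (0, 1, 7); (4, 5, 7); (7, 9, 10); (2, 4, 6)]
  | _ => Tg v
  end.
Definition cs v : nat -> nat :=
  match v with
  | 8 => ctab [:: 0; 1; 0; 2; 2; 3; 1; 3]
  | 9 => ctab [:: 0; 1; 0; 2; 3; 1; 3; 2; 3]
  | 10 => ctab [:: 0; 1; 1; 0; 2; 3; 2; 1; 2; 3]
  | 11 => ctab [:: 0; 1; 1; 2; 2; 0; 3; 3; 3; 1; 0]
  | _ => cg
  end.
Definition k4 v : nat * nat * nat * nat :=
  match v with
  | 8 => (0,1,3,5) | 9 => (0,1,4,7) | 10 => (1,3,5,8) | 11 => (0,2,3,8) | _ => (0,1,2,3)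
  end.

Lemma small_ok : all (fun v => let: (p,q,r,s) := k4 v in chk v (Ts v) (cs v) p q r s) (iota 8 12).
Proof. vm_compute. reflexivity. Qed.


Lemma Tg_ind v (P : nat -> trip -> Prop) : 20 <= v ->
  P 0 (0,1,7) -> P 1 (0,2,3) -> P 2 (0,5,6) -> P 3 (1,2,8) -> P 4 (1,3,4) ->
  (forall i, 5 <= i -> i < v - 4 -> P i (i-3, i-1, i+4)) ->
  P (v-4) (v-1,v-2,v-3) -> P (v-3) (v-1,v-4,v-7) -> P (v-2) (v-2,v-4,v-5) ->
  P (v-1) (v-3,v-5,v-6) ->
  forall i, i < v -> P i (Tg v i).
Proof.
move=> v20 p0 p1 p2 p3 p4 pm q0 q1 q2 q3 i iv; rewrite /Tg.
case: (ltnP i 5) => [i5|i5].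
  by do 5? [case: i i5 iv => [|i] i5 iv; first by []].
case: (ltnP i (v - 4)) => [iv4|iv4]; first exact: pm.
have [k [Ek hk]] : exists k, i = v - 4 + k /\ k < 4 by exists (i - (v - 4)); lia.
subst i; rewrite (_ : v - 4 + k - (v - 4) = k); last lia.
case: k hk iv iv4 i5 => [|[|[|[|k]]]] hk iv iv4 i5 //.
- by rewrite addn0.
- by rewrite (_ : v - 4 + 1 = v - 3) //; lia.
- by rewrite (_ : v - 4 + 2 = v - 2) //; lia.
- by rewrite (_ : v - 4 + 3 = v - 1) //; lia.
Qed.

Ltac fin := intros; unfold inT in *; simpl in *; lia.

Ltac inner x y v := let xy := fresh "xy" in let hx := fresh "hx" in let hy := fresh "hy" in
  move=> xy hx hy; apply: (Tg_ind (v := v) (P := fun j t => inT x t -> inT y t -> _ = j)) => //;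
  try move=> ? ? ?; fin.

Lemma Tg_H3 v x y : 20 <= v -> forall i, i < v -> x != y -> inT x (Tg v i) -> inT y (Tg v i) ->
  forall j, j < v -> inT x (Tg v j) -> inT y (Tg v j) -> i = j.
Proof.
move=> v20.
apply: (Tg_ind (P := fun i t => x != y -> inT x t -> inT y t ->
  forall j, j < v -> inT x (Tg v j) -> inT y (Tg v j) -> i = j)) => //.
all: first [inner x y v | move=> ? ? ?; inner x y v].
Qed.

Lemma cnt3 v (P : pred nat) a b c : a < v -> b < v -> c < v -> a != b -> a != c -> b != c ->
  P a -> P b -> P c -> 3 <= count P (iota 0 v).
Proof.
move=> av bv cv ab ac bc pa pb pc; rewrite -(count3 av bv cv ab ac bc).
by apply: sub_count => i; rewrite /inT /= => /or3P [] /eqP ->.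
Qed.

Lemma Tg_mid v i : 5 <= i -> i < v - 4 -> Tg v i = (i-3, i-1, i+4).
Proof. by move=> h1 h2; rewrite /Tg ltnNge h1 /= h2. Qed.
Lemma Tg_r0 v : 20 <= v -> Tg v (v-4) = (v-1,v-2,v-3).
Proof.
move=> h; rewrite /Tg (_ : (v-4 < 5) = false); last by lia.
rewrite (_ : (v - 4 < v - 4) = false); last by lia.
by rewrite (_ : v - 4 - (v - 4) = 0); last by lia.
Qed.
Lemma Tg_r1 v : 20 <= v -> Tg v (v-3) = (v-1,v-4,v-7).
Proof.
move=> h; rewrite /Tg (_ : (v-3 < 5) = false); last by lia.
rewrite (_ : (v - 3 < v - 4) = false); last by lia.
by rewrite (_ : v - 3 - (v - 4) = 1); last by lia.
Qed.
Lemma Tg_r2 v : 20 <= v -> Tg v (v-2) = (v-2,v-4,v-5).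
Proof.
move=> h; rewrite /Tg (_ : (v-2 < 5) = false); last by lia.
rewrite (_ : (v - 2 < v - 4) = false); last by lia.
by rewrite (_ : v - 2 - (v - 4) = 2); last by lia.
Qed.
Lemma Tg_r3 v : 20 <= v -> Tg v (v-1) = (v-3,v-5,v-6).
Proof.
move=> h; rewrite /Tg (_ : (v-1 < 5) = false); last by lia.
rewrite (_ : (v - 1 < v - 4) = false); last by lia.
by rewrite (_ : v - 1 - (v - 4) = 3); last by lia.
Qed.

Ltac mem := first [ rewrite Tg_r0 //; fin | rewrite Tg_r1 //; fin | rewrite Tg_r2 //; fin
  | rewrite Tg_r3 //; fin | rewrite Tg_mid; try lia; fin | rewrite /Tg /=; fin ].

Lemma LL v x : 20 <= v -> x <= 8 -> x < v -> 3 <= count (fun i => inT x (Tg v i)) (iota 0 v).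
Proof.
move=> v20 x8 xv.
  case: x x8 xv => [|[|[|[|[|[|[|[|[|x]]]]]]]]] x8 xv.
  - by apply: (cnt3 (a := 0) (b := 1) (c := 2)); try lia; mem.
  - by apply: (cnt3 (a := 0) (b := 3) (c := 4)); try lia; mem.
  - by apply: (cnt3 (a := 1) (b := 3) (c := 5)); try lia; mem.
  - by apply: (cnt3 (a := 1) (b := 4) (c := 6)); try lia; mem.
  - by apply: (cnt3 (a := 4) (b := 5) (c := 7)); try lia; mem.
  - by apply: (cnt3 (a := 2) (b := 6) (c := 8)); try lia; mem.
  - by apply: (cnt3 (a := 2) (b := 7) (c := 9)); try lia; mem.
  - by apply: (cnt3 (a := 0) (b := 8) (c := 10)); try lia; mem.
  - by apply: (cnt3 (a := 3) (b := 9) (c := 11)); try lia; mem.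
  - lia.
Qed.
Lemma MM v x : 20 <= v -> 9 <= x -> x <= v - 8 -> 3 <= count (fun i => inT x (Tg v i)) (iota 0 v).
Proof.
move=> v20 x8 xm.
by apply: (cnt3 (a := x - 4) (b := x + 1) (c := x + 3)); try lia; mem.
Qed.
Lemma RR v x : 20 <= v -> v - 8 < x -> x < v -> 3 <= count (fun i => inT x (Tg v i)) (iota 0 v).
Proof.
move=> v20 xm xv.
have [k [-> hk]] : exists k, x = v - 7 + k /\ k < 7 by exists (x - (v - 7)); lia.
case: k hk {xv xm} => [|[|[|[|[|[|[|k]]]]]]] hk.
- by apply: (cnt3 (a := v - 11) (b := v - 6) (c := v - 3)); try lia; mem.
- by apply: (cnt3 (a := v - 10) (b := v - 5) (c := v - 1)); try lia; mem.
- by apply: (cnt3 (a := v - 9) (b := v - 2) (c := v - 1)); try lia; mem.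
- by apply: (cnt3 (a := v - 8) (b := v - 3) (c := v - 2)); try lia; mem.
- by apply: (cnt3 (a := v - 7) (b := v - 4) (c := v - 1)); try lia; mem.
- by apply: (cnt3 (a := v - 6) (b := v - 4) (c := v - 2)); try lia; mem.
- by apply: (cnt3 (a := v - 5) (b := v - 4) (c := v - 3)); try lia; mem.
- lia.
Qed.

Lemma Tg_H2 v x : 20 <= v -> x < v -> 3 <= count (fun i => inT x (Tg v i)) (iota 0 v).
Proof.
move=> v20 xv; case: (leqP x 8) => h; first exact: LL.
case: (leqP x (v - 8)) => h'; [apply: MM => //; lia | exact: RR].
Qed.

Lemma Tg_H1 v : 20 <= v -> forall i, i < v -> [&& (Tg v i).1.1 < v, (Tg v i).1.2 < v, (Tg v i).2 < v,
      (Tg v i).1.1 != (Tg v i).1.2, (Tg v i).1.1 != (Tg v i).2 & (Tg v i).1.2 != (Tg v i).2].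
Proof.
move=> v20.
apply: (Tg_ind (P := fun i t => [&& t.1.1 < v, t.1.2 < v, t.2 < v,
   t.1.1 != t.1.2, t.1.1 != t.2 & t.1.2 != t.2])) => //; try move=> ? ? ?; fin.
Qed.

Lemma Tg_Hc2 v : 20 <= v -> forall i, i < v -> [&& cg (Tg v i).1.1 != cg (Tg v i).1.2,
   cg (Tg v i).1.1 != cg (Tg v i).2 & cg (Tg v i).1.2 != cg (Tg v i).2].
Proof.
move=> v20.
apply: (Tg_ind (P := fun i t => [&& cg t.1.1 != cg t.1.2, cg t.1.1 != cg t.2 & cg t.1.2 != cg t.2]))
  => //; try move=> ? ? ?; rewrite /cg; fin.
Qed.

Ltac wit i y := apply/hasP; exists i; [rewrite mem_iota; lia | apply/hasP; exists y;
  [rewrite mem_iota; lia | apply/andP; split; mem]].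

Lemma Tg_H6 v x : 20 <= v -> 0 < x < v ->
  has (fun i => has (fun y => inT x (Tg v i) && inT y (Tg v i)) (iota 0 x)) (iota 0 v).
Proof.
move=> v20 /andP [x0 xv].
have [x8|x8] := leqP x 8.
  case: x x8 x0 xv => [|[|[|[|[|[|[|[|[|x]]]]]]]]] x8 x0 xv.
  - by [].
  - wit 0 0.
  - wit 1 0.
  - wit 1 0.
  - wit 4 1.
  - wit 2 0.
  - wit 2 0.
  - wit 0 0.
  - wit 3 1.
  - lia.
wit (x - 4) (x - 7).
Qed.

Lemma Tg_cob v : 20 <= v -> [&& cob v (Tg v) 0 1, cob v (Tg v) 0 2, cob v (Tg v) 0 3,
  cob v (Tg v) 1 2, cob v (Tg v) 1 3 & cob v (Tg v) 2 3].
Proof.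
move=> v20.
have C : forall i x y, i < v -> inT x (Tg v i) -> inT y (Tg v i) -> cob v (Tg v) x y.
  by move=> i x y iv hx hy; apply/hasP; exists i; [rewrite mem_iota | rewrite hx hy].
apply/and5P; split; first (apply: (C 0)); try lia; try mem.
- apply: (C 1); try lia; mem.
- apply: (C 1); try lia; mem.
- apply: (C 3); try lia; mem.
- apply/andP; split; [apply: (C 4) | apply: (C 1)]; try lia; mem.
Qed.

Theorem mainTheorem14 (v : nat) : 8 <= v ->
  exists Bs : {set {set 'I_v}},
    [/\ sym_config_v3 Bs, config_connected Bs & strong_chromatic_number Bs = 4].
Proof.
move=> v8; case: (ltnP v 20) => v20.
  have := allP small_ok v; rewrite mem_iota v8 /= => /(_ v20).
  by case: (k4 v) => [[[p q] r] s]; apply: chk_sound.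
apply: (generic (T := Tg v) (col := cg) (p := 0) (q := 1) (r := 2) (s := 3)).
- lia.
- exact: Tg_H1.
- by move=> x; apply: Tg_H2.
- by move=> x y i j xv yv iv jv xy h1 h2 h3 h4; apply: (Tg_H3 v20 iv xy h1 h2 jv h3 h4).
- by move=> x _; rewrite /cg ltn_pmod.
- exact: Tg_Hc2.
- apply/and4P; split; lia.
- by [].
- exact: Tg_cob.
- by move=> x; apply: Tg_H6.
Qed.
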